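(* Let $(g,q,w)$ be an $m\times n$ absorbing game with all entries of $g,q,w$ rational and with deterministic transitions, i.e. $q_{ij}\in\{0,1\}$ for all $(i,j)$. If $\min(m,n)<3$, then the limit value $v=\lim_{\lambda\to0}v_\lambda$ is a rational number. *)

(* Defs.v *)
From HB Require Import structures.
From mathcomp Require Import all_boot all_order all_algebra.
From mathcomp Require Import all_classical all_reals all_analysis.
Set Implicit Arguments. Unset Strict Implicit. Unset Printing Implicit Defensive.
Import Order.TTheory GRing.Theory Num.Theory.
Local Open Scope ring_scope.
Local Open Scope classical_set_scope.

Definition mixed (R : realType) (k : nat) (x : 'rV[R]_k) : Prop :=
  (forall i, 0 <= x 0 i) /\ \sum_i x 0 i = 1.

Definition is_matrix_game_value (R : realType) (m n : nat)
    (A : 'M[R]_(m, n)) (v : R) : Prop :=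
  (exists x : 'rV[R]_m, mixed x /\ forall j, v <= \sum_i x 0 i * A i j) /\
  (exists y : 'rV[R]_n, mixed y /\ forall i, \sum_j A i j * y 0 j <= v).

(* One-shot (Shapley) matrix of the lambda-discounted absorbing game (g,q,w)
   with continuation value v: playing (i,j) yields stage payoff g i j; with
   probability q i j play is absorbed and payoff w i j is received at every
   later stage; otherwise the game repeats. *)
Definition shapley_mx (R : realType) (m n : nat) (g q w : 'M[R]_(m, n))
    (lam v : R) : 'M[R]_(m, n) :=
  \matrix_(i, j) (lam * g i j + (1 - lam) * (q i j * w i j + (1 - q i j) * v)).

(* The lambda-discounted value v_lambda: the (unique) fixed point v of
   v = val(shapley_mx g q w lam v). *)
Definition disc_value (R : realType) (m n : nat) (g q w : 'M[R]_(m, n))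
    (lam : R) : R :=
  xget 0 [set v | is_matrix_game_value (shapley_mx g q w lam v) v].

(* Main.v *)
Set Warnings "-notation-overridden,-ambiguous-paths,-notation-incompatible-prefix,-deprecated".
Require Import Defs.
From HB Require Import structures.
From mathcomp Require Import all_boot all_order all_algebra.
From mathcomp Require Import all_classical all_reals all_analysis.
From mathcomp Require Import ring lra.
Import Order.TTheory GRing.Theory Num.Theory numFieldNormedType.Exports.
Local Open Scope classical_set_scope.
Local Open Scope ring_scope.
Set Implicit Arguments. Unset Strict Implicit.

Lemma lip_cont (R : realType) (f : R -> R) (K : R) :
  (forall x y, `|f x - f y| <= K * `|x - y|) -> continuous f.
Proof.
move=> Hf x; apply/cvgrPdist_le => e e0.
have K1 : 0 < `|K| + 1 by apply: ltr_pwDr => //; apply: normr_ge0.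
near=> t.
apply: (le_trans (Hf x t)).
apply: (le_trans (y := (`|K| + 1) * `|x - t|)).
  apply: ler_wpM2r; first exact: normr_ge0.
  by apply: le_trans (ler_norm K) _; rewrite lerDl.
rewrite -ler_pdivlMl //.
near: t; apply/nbhs_normP; exists ((`|K| + 1)^-1 * e) => /=.
  by rewrite mulr_gt0 // invr_gt0.
by move=> t /= Ht; apply/ltW.
Unshelve. all: by end_near.
Qed.

Section Fin.
Variable R : realType.

Lemma fin_argmax (I : finType) (i0 : I) (F : I -> R) :
  exists i, forall j, F j <= F i.
Proof.
case: (@arg_maxP _ _ I i0 predT F isT) => i _ H; exists i => j; exact: H.
Qed.

Lemma fin_argmin (I : finType) (i0 : I) (F : I -> R) :
  exists i, forall j, F i <= F j.
Proof.
case: (@arg_minP _ _ I i0 predT F isT) => i _ H; exists i => j; exact: H.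
Qed.

Lemma fin_gap (I : finType) (i0 : I) (P : I -> bool) (h : I -> R) :
  (forall i, P i -> 0 < h i) -> exists2 d, 0 < d & forall i, P i -> d <= h i.
Proof.
move=> H.
have [i Hi] := fin_argmin i0 (fun i => if P i then h i else 1).
exists (if P i then h i else 1).
  by case: ifP => // /H.
by move=> j Pj; have := Hi j; rewrite Pj.
Qed.

Lemma sum_ind (I : finType) (i : I) (c : I -> R) :
  \sum_j (j == i)%:R * c j = c i.
Proof.
rewrite (bigD1 i) //= eqxx mul1r big1 ?addr0 // => j /negbTE ->.
by rewrite mul0r.
Qed.

Lemma fin_bound (I : finType) (c : I -> R) :
  exists2 C, 0 < C & forall i, `|c i| < C.
Proof.
exists (1 + \sum_i `|c i|).
  by rewrite ltr_pwDl // sumr_ge0 // => i _; exact: normr_ge0.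
move=> i; rewrite (bigD1 i) //=.
have : 0 <= \sum_(j | j != i) `|c j| by rewrite sumr_ge0 // => j _; exact: normr_ge0.
lra.
Qed.

End Fin.

Section Lines.
Variable R : realType.
Variable m : nat.
Variables a b : 'I_m.+1 -> R.
Definition fl i (t : R) := t * a i + (1 - t) * b i.

Lemma move_right t V : 0 <= t -> t < 1 -> (forall i, fl i t <= V) ->
  (forall s, 0 <= s -> s <= 1 -> exists i, V <= fl i s) ->
  exists i, fl i t = V /\ 0 <= a i - b i.
Proof.
move=> t0 t1 HV Hmin.
case: (pselect (exists i, fl i t = V /\ 0 <= a i - b i)) => // Hno.
have Hneg : forall i, fl i t = V -> a i - b i < 0.
  move=> i Hi; rewrite ltNge; apply/negP => H; apply: Hno; by exists i.
have [d d0 Hd] : exists2 d, 0 < d & forall i, fl i t != V -> d <= V - fl i t.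
  apply: (fin_gap ord0) => i Hi; rewrite subr_gt0 lt_neqAle Hi HV.
  done.
have [C C0 HC] := fin_bound (fun i => a i - b i).
pose eta := Num.min (1 - t) (d / C).
have eta0 : 0 < eta by rewrite lt_min subr_gt0 t1 divr_gt0.
have eta1 : eta <= 1 - t by rewrite ge_min lexx.
have etaC : eta * C <= d.
  by rewrite -ler_pdivlMr // ge_min lexx orbT.
have [i Hi] := Hmin (t + eta) (addr_ge0 t0 (ltW eta0)) ltac:(lra).
have Efl : fl i (t + eta) = fl i t + eta * (a i - b i) by rewrite /fl; ring.
rewrite Efl in Hi.
case: (eqVneq (fl i t) V) => Hfi.
  have := Hneg i Hfi => Hn.
  have : eta * (a i - b i) < 0 by rewrite pmulr_rlt0.
  lra.
have := Hd i Hfi.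
have : eta * (a i - b i) <= eta * `|a i - b i| by rewrite ler_pM2l // ler_norm.
have : eta * `|a i - b i| < eta * C by rewrite ltr_pM2l // HC.
lra.
Qed.

Definition cand V := exists i k, V = a i \/ V = b i \/
  V = b i + (b k - b i) / ((a i - b i) - (a k - b k)) * (a i - b i).

End Lines.
Arguments fl {R m}.
Arguments cand {R m}.
Arguments move_right {R m}.

Lemma pure_sum (R : realType) (I : finType) (i : I) : \sum_j (j == i)%:R = 1 :> R.
Proof.
have := sum_ind i (fun _ => (1 : R)); under eq_bigr do rewrite mulr1; done.
Qed.

Lemma pure_ge0 (R : realType) (I : finType) (i j : I) : 0 <= (j == i)%:R :> R.
Proof. by case: (j == i). Qed.

Lemma mix_sum (R : realType) (I : finType) (al : R) (i k : I) (c : I -> R) :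
  \sum_j (al * (j == i)%:R + (1 - al) * (j == k)%:R) * c j = al * c i + (1 - al) * c k.
Proof.
under eq_bigr do rewrite mulrDl -!mulrA.
by rewrite big_split /= -!mulr_sumr !sum_ind.
Qed.

Lemma minmax_lines (R : realType) (m : nat) (a b : 'I_m.+1 -> R) :
  exists t V (x : 'I_m.+1 -> R),
    [/\ 0 <= t, t <= 1, (forall i, fl a b i t <= V) & cand a b V] /\
    [/\ (forall i, 0 <= x i), \sum_i x i = 1, V <= \sum_i x i * a i &
        V <= \sum_i x i * b i].
Proof.
pose F t := \big[Num.max/fl a b ord0 t]_i fl a b i t.
have HF1 : forall i t, fl a b i t <= F t.
  by move=> i t; rewrite /F (bigD1 i) //= le_max lexx.
have HF2 : forall t, exists i, F t = fl a b i t.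
  move=> t; rewrite /F; elim/big_ind: _.
  - by exists ord0.
  - move=> x y [i ->] [j ->]; case: (leP (fl a b i t) (fl a b j t)) => H.
      by exists j.
    by exists i.
  - by move=> i _; exists i.
have [C C0 HC] := fin_bound (fun i => a i - b i).
have Hlip : forall x y, `|F x - F y| <= C * `|x - y|.
  have H1 : forall x y, F x - F y <= C * `|x - y|.
    move=> x y; have [i Hi] := HF2 x; have := HF1 i y.
    have E : fl a b i x - fl a b i y = (x - y) * (a i - b i) by rewrite /fl; ring.
    have : (x - y) * (a i - b i) <= `|x - y| * `|a i - b i|.
      by rewrite -normrM ler_norm.
    have : `|x - y| * `|a i - b i| <= `|x - y| * C.
      by rewrite ler_wpM2l // ltW.
    rewrite Hi; lra.
  move=> x y; rewrite ler_norml H1 andbT.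
  have := H1 y x; rewrite distrC; lra.
have Fc := lip_cont Hlip.
have [t] := @EVT_min R F 0 1 ler01 (continuous_subspaceT Fc).
rewrite in_itv /= => /andP [t0 t1] Hmin.
have Hmin' : forall s, 0 <= s -> s <= 1 -> exists i, F t <= fl a b i s.
  move=> s s0 s1; have [i Hi] := HF2 s; exists i; rewrite -Hi; apply: Hmin.
  by rewrite in_itv /= s0 s1.
have Hmir : forall i s, fl b a i (1 - s) = fl a b i s by move=> i s; rewrite /fl; ring.
have HV : forall i, fl a b i t <= F t by move=> i; exact: HF1.
exists t, (F t).
have Hright : t < 1 -> exists i, fl a b i t = F t /\ 0 <= a i - b i.
  by move=> tl; apply: (move_right a b t (F t) t0 tl HV Hmin').
have Hleft : 0 < t -> exists k, fl a b k t = F t /\ 0 <= b k - a k.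
  move=> tg.
  have [| | |s s0 s1|k [Hk1 Hk2]] := move_right b a (1 - t) (F t).
  - lra.
  - lra.
  - by move=> i; rewrite Hmir.
  - have [i Hi] := Hmin' (1 - s) ltac:(lra) ltac:(lra).
    have E : 1 - (1 - s) = s by ring.
    by exists i; have := Hmir i (1 - s); rewrite E => ->.
  by exists k; rewrite -Hmir.
have pure : forall i, (forall j, 0 <= (j == i)%:R :> R) /\ \sum_j (j == i)%:R = 1 :> R /\
   forall c : 'I_m.+1 -> R, \sum_j (j == i)%:R * c j = c i.
  move=> i; split; first by move=> j; exact: pure_ge0.
  split; first exact: pure_sum.
  by move=> c; exact: sum_ind.
case: (ltrP t 1) => [tl1|tg1]; last first.
  have te : t = 1 by apply: le_anti; rewrite t1 tg1.
  have [k [Hk1 Hk2]] := Hleft ltac:(lra).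
  have Ek : fl a b k t = a k by rewrite /fl te; ring.
  have [P1 [P2 P3]] := pure k.
  exists (fun j => (j == k)%:R); split.
    by split => //; exists k, k; left; rewrite -Hk1 Ek.
  by split => //; rewrite P3; lra.
have [i [Hi1 Hi2]] := Hright tl1.
case: (ltrP 0 t) => [tg0|tl0]; last first.
  have te : t = 0 by apply: le_anti; rewrite t0 tl0.
  have Ei : fl a b i t = b i by rewrite /fl te; ring.
  have [P1 [P2 P3]] := pure i.
  exists (fun j => (j == i)%:R); split.
    by split => //; exists i, i; right; left; rewrite -Hi1 Ei.
  by split => //; rewrite P3; lra.
have [k [Hk1 Hk2]] := Hleft tg0.
case: (eqVneq (a i - b i) 0) => Hdi.
  have Eab : a i = b i by move/eqP: Hdi; lra.
  have Ei : fl a b i t = b i by rewrite /fl Eab; ring.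
  have [P1 [P2 P3]] := pure i.
  exists (fun j => (j == i)%:R); split.
    by split => //; exists i, i; right; left; rewrite -Hi1 Ei.
  by split => //; rewrite P3; lra.
case: (eqVneq (b k - a k) 0) => Hdk.
  have Eab : b k = a k by move/eqP: Hdk; lra.
  have Ek : fl a b k t = a k by rewrite /fl Eab; ring.
  have [P1 [P2 P3]] := pure k.
  exists (fun j => (j == k)%:R); split.
    by split => //; exists k, k; left; rewrite -Hk1 Ek.
  by split => //; rewrite P3; lra.
have di0 : 0 < a i - b i by rewrite lt_neqAle eq_sym Hdi Hi2.
have dk0 : 0 < b k - a k by rewrite lt_neqAle eq_sym Hdk Hk2.
set D := (a i - b i) - (a k - b k).
have D0 : 0 < D by rewrite /D; lra.
have DN : D != 0 by rewrite gt_eqF.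
pose al := (b k - a k) / D.
have alD : al * D = b k - a k by rewrite /al mulfVK.
have al0 : 0 <= al by rewrite /al divr_ge0 // ltW.
have al1 : al <= 1 by rewrite /al ler_pdivrMr // mul1r /D; lra.
exists (fun j => al * (j == i)%:R + (1 - al) * (j == k)%:R); split.
  split => //; exists i, k; right; right.
  have tD : t * D = b k - b i by move: Hi1 Hk1; rewrite /D /fl; lra.
  by rewrite -Hi1 /fl -tD mulfK //; ring.
split.
- move=> j; apply: addr_ge0; apply: mulr_ge0; rewrite ?pure_ge0 //; lra.
- by rewrite big_split /= -!mulr_sumr !pure_sum !mulr1 addrC subrK.
- rewrite mix_sum.
  have E : al * a i + (1 - al) * a k - (al * fl a b i t + (1 - al) * fl a b k t) =
    (1 - t) * (al * D + (a k - b k)) by rewrite /fl /D; ring.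
  move: E; rewrite alD Hi1 Hk1; lra.
- rewrite mix_sum.
  have E : al * b i + (1 - al) * b k - (al * fl a b i t + (1 - al) * fl a b k t) =
    - t * (al * D + (a k - b k)) by rewrite /fl /D; ring.
  move: E; rewrite alD Hi1 Hk1; lra.
Qed.

Section Games.
Variable R : realType.

Lemma value_lip m n (A B : 'M[R]_(m, n)) v v' d :
  is_matrix_game_value A v -> is_matrix_game_value B v' ->
  (forall i j, A i j <= B i j + d) -> v <= v' + d.
Proof.
move=> [[x [[x0 x1] Hx]] _] [_ [y [[y0 y1] Hy]]] HAB.
have S1 : v <= \sum_j y 0 j * \sum_i x 0 i * A i j.
  have -> : v = \sum_j y 0 j * v by rewrite -mulr_suml y1 mul1r.
  by apply: ler_sum => j _; apply: ler_wpM2l.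
have S2 : \sum_j y 0 j * \sum_i x 0 i * A i j <=
          \sum_j y 0 j * \sum_i x 0 i * (B i j + d).
  apply: ler_sum => j _; apply: ler_wpM2l => //; apply: ler_sum => i _.
  by apply: ler_wpM2l.
have S3 : \sum_j y 0 j * \sum_i x 0 i * (B i j + d) =
          \sum_i x 0 i * \sum_j (B i j + d) * y 0 j.
  rewrite (eq_bigr (fun j => \sum_i y 0 j * (x 0 i * (B i j + d)))); last first.
    by move=> j _; rewrite mulr_sumr.
  rewrite exchange_big /=; apply: eq_bigr => i _; rewrite mulr_sumr.
  by apply: eq_bigr => j _; ring.
have S4 : \sum_i x 0 i * \sum_j (B i j + d) * y 0 j <= \sum_i x 0 i * (v' + d).
  apply: ler_sum => i _; apply: ler_wpM2l => //.
  rewrite (eq_bigr (fun j => B i j * y 0 j + d * y 0 j)); last by move=> j _; ring.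
  rewrite big_split /= -mulr_sumr y1 mulr1; by rewrite lerD2r.
have S5 : \sum_i x 0 i * (v' + d) = v' + d by rewrite -mulr_suml x1 mul1r.
lra.
Qed.

Lemma value_unique m n (A : 'M[R]_(m, n)) v v' :
  is_matrix_game_value A v -> is_matrix_game_value A v' -> v = v'.
Proof.
move=> H1 H2; apply: le_anti.
have := value_lip (d := 0) H1 H2 (fun i j => ltac:(rewrite addr0 lexx //)).
have := value_lip (d := 0) H2 H1 (fun i j => ltac:(rewrite addr0 lexx //)).
by rewrite !addr0 => -> ->.
Qed.

Lemma value_lb m n (A : 'M[R]_(m.+1, n)) v c :
  is_matrix_game_value A v -> (forall i j, c <= A i j) -> c <= v.
Proof.
move=> [_ [y [[y0 y1] Hy]]] Hc; apply: le_trans (Hy ord0).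
have -> : c = \sum_j c * y 0 j by rewrite -mulr_sumr y1 mulr1.
by apply: ler_sum => j _; apply: ler_wpM2r.
Qed.

Lemma value_ub m n (A : 'M[R]_(m, n.+1)) v c :
  is_matrix_game_value A v -> (forall i j, A i j <= c) -> v <= c.
Proof.
move=> [[x [[x0 x1] Hx]] _] Hc; apply: le_trans (Hx ord0) _.
have -> : c = \sum_i x 0 i * c by rewrite -mulr_suml x1 mul1r.
by apply: ler_sum => i _; apply: ler_wpM2l.
Qed.


Lemma cols2 n (hn : (n <= 1)%N) (j : 'I_n.+1) : j = ord0 \/ j = ord_max.
Proof.
case: n hn j => [|[|//]] _ j.
  by left; apply: val_inj; case: j => [[|]].
by case: j => [[|[|//]] ?]; [left|right]; apply: val_inj.
Qed.

Lemma mixed_col n (hn : (n <= 1)%N) (y : 'rV[R]_n.+1) : mixed y ->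
  exists t, [/\ 0 <= t, t <= 1 & forall F : 'I_n.+1 -> R,
    \sum_j F j * y 0 j = t * F ord0 + (1 - t) * F ord_max].
Proof.
case: n hn y => [|[|//]] _ y [y0 y1].
  exists 1; split; [exact: ler01|done|move=> F].
  have E : (ord_max : 'I_1) = ord0 by apply: val_inj.
  rewrite big_ord1 E; rewrite big_ord1 in y1; rewrite y1; ring.
rewrite !big_ord_recl big_ord0 in y1.
exists (y 0 ord0); split; [exact: y0| |move=> F].
  have := y0 (lift ord0 ord0); rewrite -y1; lra.
rewrite !big_ord_recl big_ord0.
have E : lift ord0 ord0 = (ord_max : 'I_2) by apply: val_inj.
rewrite -E; have -> : y 0 (lift ord0 ord0) = 1 - y 0 ord0 by rewrite -y1; ring.
ring.
Qed.

Lemma value_exists m n (hn : (n <= 1)%N) (A : 'M[R]_(m.+1, n.+1)) :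
  exists v, is_matrix_game_value A v /\
    cand (fun i => A i ord0) (fun i => A i ord_max) v.
Proof.
have [t [V [x [[t0 t1 HV Hc] [x0 x1 xa xb]]]]] :=
  minmax_lines (fun i => A i ord0) (fun i => A i ord_max).
exists V; split => //; split.
- exists (\row_i x i); split.
    split => [i|]; first by rewrite mxE.
    by under eq_bigr do rewrite mxE.
  by move=> j; under eq_bigr do rewrite mxE; case: (cols2 hn j) => ->.
- exists (\row_j (t * (j == ord0)%:R + (1 - t) * (j == ord_max)%:R)); split.
    split => [j|].
      by rewrite mxE; apply: addr_ge0; apply: mulr_ge0; rewrite ?pure_ge0 //; lra.
    under eq_bigr do rewrite mxE.
    by rewrite big_split /= -!mulr_sumr !pure_sum !mulr1 addrC subrK.
  move=> i; under eq_bigr do rewrite mxE mulrC.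
  by rewrite mix_sum; exact: HV.
Qed.

End Games.

Definition Ee (R : realType) (lam v g q w : R) := lam * (g - v) + (1 - lam) * (q * (w - v)).
Definition erow (R : realType) m (g0 g1 q0 q1 w0 w1 : 'I_m -> R) (lam v t : R) i :=
  t * Ee lam v (g0 i) (q0 i) (w0 i) + (1 - t) * Ee lam v (g1 i) (q1 i) (w1 i).

Section Fixed.
Variable R : realType.
Variables m n : nat.
Variables G Q W : 'M[R]_(m, n).
Hypothesis Q01 : forall i j, Q i j = 0 \/ Q i j = 1.

Definition fixedp lam v := is_matrix_game_value (shapley_mx G Q W lam v) v.

Lemma shapley_diff lam v1 v2 i j :
  0 <= lam -> lam <= 1 ->
  shapley_mx G Q W lam v1 i j <= shapley_mx G Q W lam v2 i j + (1 - lam) * `|v1 - v2|.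
Proof.
move=> l0 l1.
have -> : shapley_mx G Q W lam v1 i j = shapley_mx G Q W lam v2 i j
   + (1 - lam) * ((1 - Q i j) * (v1 - v2)) by rewrite !mxE; ring.
rewrite lerD2l; apply: ler_wpM2l; first lra.
case: (Q01 i j) => ->; rewrite ?subrr ?mul0r ?subr0 ?mul1r ?ler_norm //.
Qed.

Lemma fix_unique lam v1 v2 : 0 < lam -> lam <= 1 ->
  fixedp lam v1 -> fixedp lam v2 -> v1 = v2.
Proof.
move=> l0 l1 H1 H2.
have A1 := value_lip H1 H2 (fun i j => shapley_diff v1 v2 i j (ltW l0) l1).
have A2 := value_lip H2 H1 (fun i j => shapley_diff v2 v1 i j (ltW l0) l1).
rewrite distrC in A2.
have B : `|v1 - v2| <= (1 - lam) * `|v1 - v2| by rewrite ler_norml; apply/andP; split; lra.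
have : lam * `|v1 - v2| <= 0 by lra.
rewrite pmulr_rle0 // normr_le0 subr_eq0 => /eqP //.
Qed.

Lemma disc_fix lam v : 0 < lam -> lam <= 1 -> fixedp lam v ->
  disc_value G Q W lam = v.
Proof.
move=> l0 l1 Hv; apply: xget_unique => //= w Hw.
exact: (fix_unique l0 l1 Hw Hv).
Qed.

End Fixed.

Section Exists.
Variable R : realType.
Variables m n : nat.
Hypothesis hn : (n <= 1)%N.
Variables G Q W : 'M[R]_(m.+1, n.+1).
Hypothesis Q01 : forall i j, Q i j = 0 \/ Q i j = 1.

Lemma fix_exists lam : 0 < lam -> lam <= 1 -> exists v, fixedp G Q W lam v.
Proof.
move=> l0 l1.
pose valf v := xget 0 [set V | is_matrix_game_value (shapley_mx G Q W lam v) V].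
have Hval : forall v, is_matrix_game_value (shapley_mx G Q W lam v) (valf v).
  move=> v; apply: (@xgetPex _ 0 [set V | is_matrix_game_value (shapley_mx G Q W lam v) V]).
  by have [V [HV _]] := value_exists hn (shapley_mx G Q W lam v); exists V.
have Lip : forall x y, `|valf x - valf y| <= (1 - lam) * `|x - y|.
  move=> x y.
  have A1 := value_lip (Hval x) (Hval y) (fun i j => shapley_diff G W Q01 x y i j (ltW l0) l1).
  have A2 := value_lip (Hval y) (Hval x) (fun i j => shapley_diff G W Q01 y x i j (ltW l0) l1).
  rewrite distrC in A2.
  by rewrite ler_norml; apply/andP; split; lra.
pose phi v := valf v - v.
have Lphi : forall x y, `|phi x - phi y| <= (2 - lam) * `|x - y|.
  move=> x y; have := Lip x y; rewrite /phi ler_norml => /andP [L1 L2].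
  have := ler_norm (x - y); have := ler_norm (y - x); rewrite distrC => N1 N2.
  by rewrite ler_norml; apply/andP; split; lra.
have [C C0 HC] := fin_bound (fun ij : 'I_m.+1 * 'I_n.+1 => `|G ij.1 ij.2| + `|W ij.1 ij.2|).
have HGW : forall i j, -C <= G i j <= C /\ -C <= W i j <= C.
  move=> i j; have H := HC (i, j); simpl in H.
  have N1 := normr_ge0 (G i j); have N2 := normr_ge0 (W i j).
  have N3 := ler_norm (G i j); have N4 := ler_norm (- G i j); rewrite normrN in N4.
  have N5 := ler_norm (W i j); have N6 := ler_norm (- W i j); rewrite normrN in N6.
  have N0 := ler_norm (`|G i j| + `|W i j|).
  split; apply/andP; split; lra.
have phiL : 0 <= phi (- C).
  rewrite /phi subr_ge0; apply: (value_lb (Hval (-C))) => i j; rewrite mxE.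
  have [/andP [g1 g2] /andP [w1 w2]] := HGW i j.
  have h1 : lam * (- C) <= lam * G i j by apply: ler_wpM2l; lra.
  have h2 : (1 - lam) * (- C) <= (1 - lam) * W i j by apply: ler_wpM2l; lra.
  case: (Q01 i j) => ->; lra.
have phiU : phi C <= 0.
  rewrite /phi subr_le0; apply: (value_ub (Hval C)) => i j; rewrite mxE.
  have [/andP [g1 g2] /andP [w1 w2]] := HGW i j.
  have h1 : lam * G i j <= lam * C by apply: ler_wpM2l; lra.
  have h2 : (1 - lam) * W i j <= (1 - lam) * C by apply: ler_wpM2l; lra.
  case: (Q01 i j) => ->; lra.
have [c _ Hc] := @IVT R phi (- C) C 0 ltac:(lra) (continuous_subspaceT (lip_cont Lphi))
  ltac:(rewrite ge_min le_max phiU orbT /=; apply/orP; left; done).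
exists c; rewrite /fixedp.
have : valf c = c by move: Hc; rewrite /phi => /eqP; rewrite subr_eq0 => /eqP.
by move=> E; have := Hval c; rewrite E.
Qed.

Let g0 i := G i ord0. Let g1 i := G i ord_max.
Let q0 i := Q i ord0. Let q1 i := Q i ord_max.
Let w0 i := W i ord0. Let w1 i := W i ord_max.
Let kap lam t i := lam + (1 - lam) * (t * q0 i + (1 - t) * q1 i).

Lemma row_id lam vl v t i :
  t * shapley_mx G Q W lam vl i ord0 + (1 - t) * shapley_mx G Q W lam vl i ord_max =
  vl + erow g0 g1 q0 q1 w0 w1 lam v t i - kap lam t i * (vl - v).
Proof. by rewrite !mxE /erow /Ee /kap /g0 /g1 /q0 /q1 /w0 /w1; ring. Qed.

Lemma kap_ge lam t i : 0 <= lam -> lam <= 1 -> 0 <= t -> t <= 1 -> lam <= kap lam t i.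
Proof.
move=> l0 l1 t0 t1; rewrite /kap lerDl; apply: mulr_ge0; first lra.
rewrite /q0 /q1; case: (Q01 i ord0) => ->; case: (Q01 i ord_max) => ->; lra.
Qed.

Lemma upper_bound lam vl v t : 0 < lam -> lam <= 1 -> fixedp G Q W lam vl ->
  0 <= t -> t <= 1 -> (forall i, erow g0 g1 q0 q1 w0 w1 lam v t i <= 0) -> vl <= v.
Proof.
move=> l0 l1 [[x [[x0 x1] Hx]] _] t0 t1 He.
pose S := shapley_mx G Q W lam vl.
have E1 : \sum_i x 0 i * (t * S i ord0 + (1 - t) * S i ord_max) =
   t * \sum_i x 0 i * S i ord0 + (1 - t) * \sum_i x 0 i * S i ord_max.
  rewrite !mulr_sumr -big_split /=; apply: eq_bigr => i _; ring.
have I1 : vl <= \sum_i x 0 i * (t * S i ord0 + (1 - t) * S i ord_max).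
  rewrite E1; have := Hx ord0; have := Hx ord_max => h1 h2.
  have : t * vl <= t * \sum_i x 0 i * S i ord0 by apply: ler_wpM2l.
  have : (1 - t) * vl <= (1 - t) * \sum_i x 0 i * S i ord_max by apply: ler_wpM2l; lra.
  lra.
pose K := \sum_i x 0 i * kap lam t i.
have E2 : \sum_i x 0 i * (t * S i ord0 + (1 - t) * S i ord_max) =
  vl + \sum_i x 0 i * erow g0 g1 q0 q1 w0 w1 lam v t i - (vl - v) * K.
  rewrite /K mulr_sumr.
  rewrite {1}(_ : vl = \sum_i x 0 i * vl); last by rewrite -mulr_suml x1 mul1r.
  rewrite -big_split -sumrB /=; apply: eq_bigr => i _; rewrite /S (row_id lam vl v t i); ring.
have E3 : \sum_i x 0 i * erow g0 g1 q0 q1 w0 w1 lam v t i <= 0.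
  apply: sumr_le0 => i _; rewrite mulr_ge0_le0 //.
have HK : lam <= K.
  rewrite /K {1}(_ : lam = \sum_i x 0 i * lam); last by rewrite -mulr_suml x1 mul1r.
  apply: ler_sum => i _; apply: ler_wpM2l => //; exact: (kap_ge i (ltW l0) l1 t0 t1).
rewrite leNgt; apply/negP => Hv.
have : 0 < (vl - v) * K by rewrite mulr_gt0 ?subr_gt0 //; lra.
lra.
Qed.

Lemma lower_bound lam vl v : 0 < lam -> lam <= 1 -> fixedp G Q W lam vl ->
  (forall t, 0 <= t -> t <= 1 -> exists i, 0 <= erow g0 g1 q0 q1 w0 w1 lam v t i) ->
  v <= vl.
Proof.
move=> l0 l1 [_ [y [Hy Hy2]]] He.
have [t [t0 t1 Ht]] := mixed_col hn Hy.
have [i Hi] := He t t0 t1.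
have := Hy2 i; rewrite (Ht (fun j => shapley_mx G Q W lam vl i j)) (row_id lam vl v t i).
have Hk := kap_ge i (ltW l0) l1 t0 t1.
move=> H.
rewrite leNgt; apply/negP => Hv.
have : 0 < kap lam t i * (v - vl) by rewrite mulr_gt0 ?subr_gt0 //; lra.
lra.
Qed.

End Exists.

Section Small.
Variable R : realType.

Lemma pm (a x y : R) : 0 <= a -> x <= y -> a * x <= a * y.
Proof. by move=> a0 xy; apply: ler_wpM2l. Qed.

Definition bnd (C v g0 g1 w0 w1 : R) :=
  [/\ -C <= g0 - v <= C, -C <= g1 - v <= C, -C <= w0 - v <= C & -C <= w1 - v <= C].

Lemma U00 (l t v g0 g1 w0 w1 : R) : 0 <= l -> t * g0 + (1 - t) * g1 <= v ->
  t * Ee l v g0 0 w0 + (1 - t) * Ee l v g1 0 w1 <= 0.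
Proof.
move=> l0 H; rewrite /Ee.
have -> : t * (l * (g0 - v) + (1 - l) * (0 * (w0 - v))) +
   (1 - t) * (l * (g1 - v) + (1 - l) * (0 * (w1 - v))) = l * (t * g0 + (1 - t) * g1 - v) by ring.
by apply: mulr_ge0_le0 => //; lra.
Qed.

Lemma U11 (C d l t v g0 g1 w0 w1 : R) : bnd C v g0 g1 w0 w1 -> 0 <= l -> l <= 1 ->
  0 <= t -> t <= 1 -> l * (C + d) <= d -> t * w0 + (1 - t) * w1 <= v - d ->
  t * Ee l v g0 1 w0 + (1 - t) * Ee l v g1 1 w1 <= 0.
Proof.
move=> [/andP[a1 a2] /andP[b1 b2] /andP[c1 c2] /andP[e1 e2]] l0 l1 t0 t1 lC H; rewrite /Ee.
have P1 := @pm t _ _ t0 a2.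
have P2 := @pm (1 - t) _ _ ltac:(lra) b2.
have P3 := @pm l (t * (g0 - v) + (1 - t) * (g1 - v)) C l0 ltac:(lra).
have P4 := @pm (1 - l) (t * w0 + (1 - t) * w1 - v) (- d) ltac:(lra) ltac:(lra).
lra.
Qed.

Ltac bnds H := case: H => /andP[a1 a2] /andP[b1 b2] /andP[c1 c2] /andP[e1 e2].

Lemma U10 (C d eta l t v g0 g1 w0 w1 : R) : bnd C v g0 g1 w0 w1 -> 0 <= l -> l <= 1 ->
  0 <= eta -> eta <= t -> t <= 1 -> 0 <= d -> l * (C + d) <= eta * d -> w0 <= v - d ->
  t * Ee l v g0 1 w0 + (1 - t) * Ee l v g1 0 w1 <= 0.
Proof.
move=> B l0 l1 e0 et t1 d0 lC H; bnds B; rewrite /Ee.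
have B1 := @pm (t * l) _ _ ltac:(apply: mulr_ge0; lra) a2.
have B2 := @pm (t * (1 - l)) (w0 - v) (- d) ltac:(apply: mulr_ge0; lra) ltac:(lra).
have B3 := @pm ((1 - t) * l) _ _ ltac:(apply: mulr_ge0; lra) b2.
have B4 := @pm d _ _ d0 et.
have B5 := @pm (l * d) t 1 ltac:(apply: mulr_ge0; lra) t1.
lra.
Qed.

Lemma U01 (C d eta l t v g0 g1 w0 w1 : R) : bnd C v g0 g1 w0 w1 -> 0 <= l -> l <= 1 ->
  0 <= eta -> 0 <= t -> eta <= 1 - t -> 0 <= d -> l * (C + d) <= eta * d -> w1 <= v - d ->
  t * Ee l v g0 0 w0 + (1 - t) * Ee l v g1 1 w1 <= 0.
Proof.
move=> B l0 l1 e0 t0 et d0 lC H; bnds B; rewrite /Ee.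
have B1 := @pm (t * l) _ _ ltac:(apply: mulr_ge0; lra) a2.
have B2 := @pm ((1 - t) * (1 - l)) (w1 - v) (- d) ltac:(apply: mulr_ge0; lra) ltac:(lra).
have B3 := @pm ((1 - t) * l) _ _ ltac:(apply: mulr_ge0; lra) b2.
have B4 := @pm d _ _ d0 et.
have B5 := @pm (l * d) (1 - t) 1 ltac:(apply: mulr_ge0; lra) ltac:(lra).
lra.
Qed.

Lemma U00b (C d l t v g0 g1 w0 w1 : R) : bnd C v g0 g1 w0 w1 -> 0 <= l ->
  0 <= t -> t <= 1 -> t * (C + d) <= d -> g1 <= v - d ->
  t * Ee l v g0 0 w0 + (1 - t) * Ee l v g1 0 w1 <= 0.
Proof.
move=> B l0 t0 t1 tC H; bnds B; rewrite /Ee.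
have B1 := @pm t _ _ t0 a2.
have B2 := @pm (1 - t) (g1 - v) (- d) ltac:(lra) ltac:(lra).
have -> : t * (l * (g0 - v) + (1 - l) * (0 * (w0 - v))) +
   (1 - t) * (l * (g1 - v) + (1 - l) * (0 * (w1 - v))) =
   l * (t * (g0 - v) + (1 - t) * (g1 - v)) by ring.
by apply: mulr_ge0_le0 => //; lra.
Qed.

Lemma U11b (C d l t v g0 g1 w0 w1 : R) : bnd C v g0 g1 w0 w1 -> 0 <= l -> l <= 1/2 ->
  0 <= t -> t <= 1 -> 0 <= d -> 2 * (t * (C + d)) <= d -> 4 * (l * C) <= d -> w1 <= v - d ->
  t * Ee l v g0 1 w0 + (1 - t) * Ee l v g1 1 w1 <= 0.
Proof.
move=> B l0 l1 t0 t1 d0 tC lC H; bnds B; rewrite /Ee.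
have P1 := @pm t _ _ t0 a2.
have P2 := @pm (1 - t) _ _ ltac:(lra) b2.
have P3 := @pm l (t * (g0 - v) + (1 - t) * (g1 - v)) C l0 ltac:(lra).
have Q1 := @pm t _ _ t0 c2.
have Q2 := @pm (1 - t) (w1 - v) (- d) ltac:(lra) ltac:(lra).
have P4 := @pm (1 - l) (t * (w0 - v) + (1 - t) * (w1 - v)) (- (d / 2)) ltac:(lra) ltac:(lra).
have P5 := @pm d (1 / 2) (1 - l) d0 ltac:(lra).
lra.
Qed.

Lemma U01b (C d l t v g0 g1 w0 w1 : R) : bnd C v g0 g1 w0 w1 -> 0 <= l -> l <= 1/2 ->
  0 <= t -> t <= 1/2 -> 0 <= d -> 4 * (l * C) <= d -> w1 <= v - d ->
  t * Ee l v g0 0 w0 + (1 - t) * Ee l v g1 1 w1 <= 0.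
Proof.
move=> B l0 l1 t0 t1 d0 lC H; bnds B; rewrite /Ee.
have X1 := @pm l _ _ l0 b2.
have X2 := @pm (1 - l) (w1 - v) (- d) ltac:(lra) ltac:(lra).
have X3 := @pm d (1 / 2) (1 - l) d0 ltac:(lra).
have X4 := @pm (1 - t) (l * (g1 - v) + (1 - l) * (w1 - v)) (- (d / 4)) ltac:(lra) ltac:(lra).
have Y1 := @pm l _ _ l0 a2.
have Y2 := @pm t (l * (g0 - v)) (d / 4) t0 ltac:(lra).
have Y3 := @pm d t (1 / 2) d0 t1.
lra.
Qed.

Lemma U10b (C d l t s tau v g0 g1 w0 w1 : R) : bnd C v g0 g1 w0 w1 ->
  0 <= tau -> tau <= 1 -> 0 <= s -> t = s * tau -> l = s * (1 - tau) -> 0 <= d ->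
  3 * (t * C) <= d -> tau * w0 + (1 - tau) * g1 <= v - d ->
  t * Ee l v g0 1 w0 + (1 - t) * Ee l v g1 0 w1 <= 0.
Proof.
move=> B ta0 ta1 s0 Ht Hl d0 tC H; bnds B; rewrite /Ee.
have t0 : 0 <= t by rewrite Ht; apply: mulr_ge0.
have l0 : 0 <= l by rewrite Hl; apply: mulr_ge0; lra.
have F1 : t * (w0 - v) + l * (g1 - v) = s * (tau * (w0 - v) + (1 - tau) * (g1 - v)).
  by rewrite Ht Hl; ring.
have F2 := @pm s (tau * (w0 - v) + (1 - tau) * (g1 - v)) (- d) s0 ltac:(lra).
have F3 : s * d = t * d + l * d by rewrite Ht Hl; ring.
have F4 := @pm (t * l) ((g0 - v) - (w0 - v) - (g1 - v)) (3 * C)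
  ltac:(apply: mulr_ge0; lra) ltac:(lra).
have F5 := @pm l (3 * (t * C)) d l0 tC.
have F6 : 0 <= t * d by apply: mulr_ge0.
lra.
Qed.

Lemma L00 (l t v g0 g1 w0 w1 : R) : 0 <= l -> v <= t * g0 + (1 - t) * g1 ->
  0 <= t * Ee l v g0 0 w0 + (1 - t) * Ee l v g1 0 w1.
Proof.
move=> l0 H; rewrite /Ee.
have -> : t * (l * (g0 - v) + (1 - l) * (0 * (w0 - v))) +
   (1 - t) * (l * (g1 - v) + (1 - l) * (0 * (w1 - v))) = l * (t * g0 + (1 - t) * g1 - v) by ring.
by apply: mulr_ge0 => //; lra.
Qed.

Lemma L11 (C d l t v g0 g1 w0 w1 : R) : bnd C v g0 g1 w0 w1 -> 0 <= l -> l <= 1 ->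
  0 <= t -> t <= 1 -> l * (C + d) <= d -> v + d <= t * w0 + (1 - t) * w1 ->
  0 <= t * Ee l v g0 1 w0 + (1 - t) * Ee l v g1 1 w1.
Proof.
move=> B l0 l1 t0 t1 lC H; bnds B; rewrite /Ee.
have P1 := @pm t _ _ t0 a1.
have P2 := @pm (1 - t) _ _ ltac:(lra) b1.
have P3 := @pm l (- C) (t * (g0 - v) + (1 - t) * (g1 - v)) l0 ltac:(lra).
have P4 := @pm (1 - l) d (t * w0 + (1 - t) * w1 - v) ltac:(lra) ltac:(lra).
lra.
Qed.

Lemma L10 (C d eta l t v g0 g1 w0 w1 : R) : bnd C v g0 g1 w0 w1 -> 0 <= l -> l <= 1 ->
  0 <= eta -> eta <= t -> t <= 1 -> 0 <= d -> l * (C + d) <= eta * d -> v + d <= w0 ->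
  0 <= t * Ee l v g0 1 w0 + (1 - t) * Ee l v g1 0 w1.
Proof.
move=> B l0 l1 e0 et t1 d0 lC H; bnds B; rewrite /Ee.
have B1 := @pm (t * l) _ _ ltac:(apply: mulr_ge0; lra) a1.
have B2 := @pm (t * (1 - l)) d (w0 - v) ltac:(apply: mulr_ge0; lra) ltac:(lra).
have B3 := @pm ((1 - t) * l) _ _ ltac:(apply: mulr_ge0; lra) b1.
have B4 := @pm d _ _ d0 et.
have B5 := @pm (l * d) t 1 ltac:(apply: mulr_ge0; lra) t1.
lra.
Qed.

Lemma L01 (C d eta l t v g0 g1 w0 w1 : R) : bnd C v g0 g1 w0 w1 -> 0 <= l -> l <= 1 ->
  0 <= eta -> 0 <= t -> eta <= 1 - t -> 0 <= d -> l * (C + d) <= eta * d -> v + d <= w1 ->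
  0 <= t * Ee l v g0 0 w0 + (1 - t) * Ee l v g1 1 w1.
Proof.
move=> B l0 l1 e0 t0 et d0 lC H; bnds B; rewrite /Ee.
have B1 := @pm (t * l) _ _ ltac:(apply: mulr_ge0; lra) a1.
have B2 := @pm ((1 - t) * (1 - l)) d (w1 - v) ltac:(apply: mulr_ge0; lra) ltac:(lra).
have B3 := @pm ((1 - t) * l) _ _ ltac:(apply: mulr_ge0; lra) b1.
have B4 := @pm d _ _ d0 et.
have B5 := @pm (l * d) (1 - t) 1 ltac:(apply: mulr_ge0; lra) ltac:(lra).
lra.
Qed.

Lemma L00b (C d l t v g0 g1 w0 w1 : R) : bnd C v g0 g1 w0 w1 -> 0 <= l ->
  0 <= t -> t <= 1 -> t * (C + d) <= d -> v + d <= g1 ->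
  0 <= t * Ee l v g0 0 w0 + (1 - t) * Ee l v g1 0 w1.
Proof.
move=> B l0 t0 t1 tC H; bnds B; rewrite /Ee.
have B1 := @pm t _ _ t0 a1.
have B2 := @pm (1 - t) d (g1 - v) ltac:(lra) ltac:(lra).
have -> : t * (l * (g0 - v) + (1 - l) * (0 * (w0 - v))) +
   (1 - t) * (l * (g1 - v) + (1 - l) * (0 * (w1 - v))) =
   l * (t * (g0 - v) + (1 - t) * (g1 - v)) by ring.
by apply: mulr_ge0 => //; lra.
Qed.

Lemma L11b (C d l t v g0 g1 w0 w1 : R) : bnd C v g0 g1 w0 w1 -> 0 <= l -> l <= 1/2 ->
  0 <= t -> t <= 1 -> 0 <= d -> 2 * (t * (C + d)) <= d -> 4 * (l * C) <= d -> v + d <= w1 ->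
  0 <= t * Ee l v g0 1 w0 + (1 - t) * Ee l v g1 1 w1.
Proof.
move=> B l0 l1 t0 t1 d0 tC lC H; bnds B; rewrite /Ee.
have P1 := @pm t _ _ t0 a1.
have P2 := @pm (1 - t) _ _ ltac:(lra) b1.
have P3 := @pm l (- C) (t * (g0 - v) + (1 - t) * (g1 - v)) l0 ltac:(lra).
have Q1 := @pm t _ _ t0 c1.
have Q2 := @pm (1 - t) d (w1 - v) ltac:(lra) ltac:(lra).
have P4 := @pm (1 - l) (d / 2) (t * (w0 - v) + (1 - t) * (w1 - v)) ltac:(lra) ltac:(lra).
have P5 := @pm d (1 / 2) (1 - l) d0 ltac:(lra).
lra.
Qed.

Lemma L01b (C d l t v g0 g1 w0 w1 : R) : bnd C v g0 g1 w0 w1 -> 0 <= l -> l <= 1/2 ->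
  0 <= t -> t <= 1/2 -> 0 <= d -> 4 * (l * C) <= d -> v + d <= w1 ->
  0 <= t * Ee l v g0 0 w0 + (1 - t) * Ee l v g1 1 w1.
Proof.
move=> B l0 l1 t0 t1 d0 lC H; bnds B; rewrite /Ee.
have X1 := @pm l _ _ l0 b1.
have X2 := @pm (1 - l) d (w1 - v) ltac:(lra) ltac:(lra).
have X3 := @pm d (1 / 2) (1 - l) d0 ltac:(lra).
have X4 := @pm (1 - t) (d / 4) (l * (g1 - v) + (1 - l) * (w1 - v)) ltac:(lra) ltac:(lra).
have Y1 := @pm l _ _ l0 a1.
have Y2 := @pm t (- (d / 4)) (l * (g0 - v)) t0 ltac:(lra).
have Y3 := @pm d t (1 / 2) d0 t1.
lra.
Qed.

Lemma L10b (C d l t s tau v g0 g1 w0 w1 : R) : bnd C v g0 g1 w0 w1 ->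
  0 <= tau -> tau <= 1 -> 0 <= s -> t = s * tau -> l = s * (1 - tau) -> 0 <= d ->
  3 * (t * C) <= d -> v + d <= tau * w0 + (1 - tau) * g1 ->
  0 <= t * Ee l v g0 1 w0 + (1 - t) * Ee l v g1 0 w1.
Proof.
move=> B ta0 ta1 s0 Ht Hl d0 tC H; bnds B; rewrite /Ee.
have t0 : 0 <= t by rewrite Ht; apply: mulr_ge0.
have l0 : 0 <= l by rewrite Hl; apply: mulr_ge0; lra.
have F1 : t * (w0 - v) + l * (g1 - v) = s * (tau * (w0 - v) + (1 - tau) * (g1 - v)).
  by rewrite Ht Hl; ring.
have F2 := @pm s d (tau * (w0 - v) + (1 - tau) * (g1 - v)) s0 ltac:(lra).
have F3 : s * d = t * d + l * d by rewrite Ht Hl; ring.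
have F4 := @pm (t * l) (- (3 * C)) ((g0 - v) - (w0 - v) - (g1 - v))
  ltac:(apply: mulr_ge0; lra) ltac:(lra).
have F5 := @pm l (3 * (t * C)) d l0 tC.
have F6 : 0 <= t * d by apply: mulr_ge0.
lra.
Qed.

End Small.

Lemma perturb (R : realType) m (a b : 'I_m.+1 -> R) (C v tau eta : R) :
  (forall i, -C <= a i - v <= C /\ -C <= b i - v <= C) ->
  0 <= tau -> tau <= 1 -> 0 <= eta -> eta <= 1/2 ->
  let t := (1 - 2 * eta) * tau + eta in
  [/\ eta <= t, t <= 1 - eta & forall i, fl a b i t <= fl a b i tau + 2 * (eta * C)].
Proof.
move=> H t0 t1 e0 e1 t; split; rewrite /t.
- have := @pm _ tau 0 (1 - 2 * eta) t0 ltac:(lra) ; lra.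
- have := @pm _ (1 - 2 * eta) tau 1 ltac:(lra) t1; lra.
move=> i; have [/andP[a1 a2] /andP[b1 b2]] := H i.
have E : fl a b i ((1 - 2 * eta) * tau + eta) - fl a b i tau =
  eta * ((1 - 2 * tau) * (a i - b i)) by rewrite /fl; ring.
have K : (1 - 2 * tau) * (a i - b i) <= 2 * C.
  have := ler_norm ((1 - 2 * tau) * (a i - b i)); rewrite normrM.
  have : `|1 - 2 * tau| <= 1 by rewrite ler_norml; apply/andP; split; lra.
  have : `|a i - b i| <= 2 * C by rewrite ler_norml; apply/andP; split; lra.
  move=> h1 h2 h3.
  have := @ler_pM _ `|1 - 2 * tau| 1 `|a i - b i| (2 * C) (normr_ge0 _) (normr_ge0 _) h2 h1.
  lra.
have := @pm _ eta _ _ e0 K; lra.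
Qed.

Section Analysis.
Variable R : realType.
Variable m : nat.
Variables g0 g1 q0 q1 w0 w1 : 'I_m.+1 -> R.
Hypothesis Hq : forall i, (q0 i = 0 \/ q0 i = 1) /\ (q1 i = 0 \/ q1 i = 1).

Definition La0 i := if q0 i == 0 then (if q1 i == 0 then g0 i else w1 i) else w0 i.
Definition La1 i := if q1 i == 0 then (if q0 i == 0 then g1 i else w0 i) else w1 i.
Definition Lb1 i := if q1 i == 0 then g1 i else w1 i.
Definition Lc1 i := if q0 i == 0 then g0 i else w0 i.

Lemma bound_data v : exists2 C, 0 < C & forall i, bnd C v (g0 i) (g1 i) (w0 i) (w1 i).
Proof.
have [C C0 HC] := fin_bound (fun i => `|g0 i - v| + `|g1 i - v| + `|w0 i - v| + `|w1 i - v|).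
exists C => // i; have H := HC i.
have N0 := ler_norm (`|g0 i - v| + `|g1 i - v| + `|w0 i - v| + `|w1 i - v|).
have A1 := normr_ge0 (g0 i - v); have A2 := normr_ge0 (g1 i - v).
have A3 := normr_ge0 (w0 i - v); have A4 := normr_ge0 (w1 i - v).
have B1 := ler_norm (g0 i - v); have B2 := ler_norm (g1 i - v).
have B3 := ler_norm (w0 i - v); have B4 := ler_norm (w1 i - v).
have D1 := ler_norm (- (g0 i - v)); have D2 := ler_norm (- (g1 i - v)).
have D3 := ler_norm (- (w0 i - v)); have D4 := ler_norm (- (w1 i - v)).
rewrite !normrN in D1 D2 D3 D4.
by split; apply/andP; split; lra.
Qed.

Lemma lines_bnd C v i : bnd C v (g0 i) (g1 i) (w0 i) (w1 i) ->
  [/\ -C <= La0 i - v <= C, -C <= La1 i - v <= C, -C <= Lb1 i - v <= C & -C <= Lc1 i - v <= C].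
Proof.
move=> B; have B' := B; case: B' => b1 b2 b3 b4.
rewrite /La0 /La1 /Lb1 /Lc1.
by case: (q0 i == 0); case: (q1 i == 0).
Qed.

Lemma UA v V0 tau0 : 0 <= tau0 -> tau0 <= 1 -> (forall i, fl La0 La1 i tau0 <= V0) -> V0 < v ->
  exists2 l0, 0 < l0 & forall l, 0 < l -> l < l0 ->
    exists t, [/\ 0 <= t, t <= 1 & forall i, erow g0 g1 q0 q1 w0 w1 l v t i <= 0].
Proof.
move=> ta0 ta1 HL Vv.
have [C C0 HC] := bound_data v.
pose d := (v - V0) / 2.
have d0 : 0 < d by rewrite /d divr_gt0 // subr_gt0.
have dE : v - V0 = 2 * d by rewrite /d; field.
pose eta := Num.min (1/4) (d / (4 * C)).
have e0 : 0 < eta by rewrite lt_min !divr_gt0 // ?mulr_gt0 //; lra.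
have e1 : eta <= 1/4 by rewrite ge_min lexx.
have eC : eta * (4 * C) <= d.
  have : eta <= d / (4 * C) by rewrite ge_min lexx orbT.
  by rewrite ler_pdivlMr // mulr_gt0 //; lra.
have LB : forall i, -C <= La0 i - v <= C /\ -C <= La1 i - v <= C.
  by move=> i; have [? ? _ _] := lines_bnd (HC i).
have [tl1 tl2 HT] := perturb LB ta0 ta1 (ltW e0) ltac:(lra).
set t := (1 - 2 * eta) * tau0 + eta in tl1 tl2 HT.
pose l0 := Num.min (1/2) (eta * d / (C + d)).
exists l0; first by rewrite lt_min !divr_gt0 ?mulr_gt0 //; lra.
move=> l lp ll0.
have l12 : l <= 1/2 by have := ll0; rewrite lt_min => /andP [h _]; lra.
have lCd : l * (C + d) <= eta * d.
  have : l < eta * d / (C + d) by move: ll0; rewrite lt_min => /andP [_ h].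
  by rewrite ltr_pdivlMr; [move=> /ltW | lra].
have ed := @pm _ d eta 1 (ltW d0) ltac:(lra).
exists t; split; [lra|lra|] => i.
have Hi : fl La0 La1 i t <= v - d by have := HT i; have := HL i; lra.
have B := HC i.
move: Hi; rewrite /erow /fl /La0 /La1.
have [[h0|h0] [h1|h1]] := Hq i; rewrite h0 h1 ?eqxx ?oner_eq0 /= => Hi.
- by apply: U00; lra.
- by apply: (U01 (C := C) (d := d) (eta := eta)) => //; lra.
- by apply: (U10 (C := C) (d := d) (eta := eta)) => //; lra.
- by apply: (U11 (C := C) (d := d)) => //; lra.
Qed.

Lemma UB v V0 tau0 : 0 <= tau0 -> tau0 <= 1 -> (forall i, fl La1 Lb1 i tau0 <= V0) -> V0 < v ->
  exists2 l0, 0 < l0 & forall l, 0 < l -> l < l0 ->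
    exists t, [/\ 0 <= t, t <= 1 & forall i, erow g0 g1 q0 q1 w0 w1 l v t i <= 0].
Proof.
move=> ta0 ta1 HL Vv.
have [C C0 HC] := bound_data v.
pose d := (v - V0) / 2.
have d0 : 0 < d by rewrite /d divr_gt0 // subr_gt0.
have dE : v - V0 = 2 * d by rewrite /d; field.
pose eta := Num.min (1/4) (d / (4 * C)).
have e0 : 0 < eta by rewrite lt_min !divr_gt0 // ?mulr_gt0 //; lra.
have e1 : eta <= 1/4 by rewrite ge_min lexx.
have eC : eta * (4 * C) <= d.
  have : eta <= d / (4 * C) by rewrite ge_min lexx orbT.
  by rewrite ler_pdivlMr // mulr_gt0 //; lra.
have LB : forall i, -C <= La1 i - v <= C /\ -C <= Lb1 i - v <= C.
  by move=> i; have [_ ? ? _] := lines_bnd (HC i).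
have [tl1 tl2 HT] := perturb LB ta0 ta1 (ltW e0) ltac:(lra).
set tau := (1 - 2 * eta) * tau0 + eta in tl1 tl2 HT.
pose l0 := Num.min (1/2) (eta * d / (8 * (C + d))).
exists l0; first by rewrite lt_min !divr_gt0 ?mulr_gt0 //; lra.
move=> l lp ll0.
have l12 : l <= 1/2 by have := ll0; rewrite lt_min => /andP [h _]; lra.
have lCd : l * (8 * (C + d)) <= eta * d.
  have : l < eta * d / (8 * (C + d)) by move: ll0; rewrite lt_min => /andP [_ h].
  by rewrite ltr_pdivlMr; [move=> /ltW | lra].
have ed := @pm _ d eta (1/4) (ltW d0) e1.
have ld0 : 0 <= l * d by apply: mulr_ge0; lra.
have lC : 4 * (l * C) <= d by lra.
have ta0' : 0 <= tau by lra.
have tN : 1 - tau != 0 by apply/eqP; lra.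
pose s := l / (1 - tau).
have s0 : 0 <= s by rewrite /s divr_ge0 //; lra.
pose t := s * tau.
have Ht : t = s * tau by [].
have Hl : l = s * (1 - tau) by rewrite /s divfK.
have t0 : 0 <= t by rewrite /t mulr_ge0.
have teta : t * eta <= l.
  have F1 := @pm _ eta tau 1 (ltW e0) ltac:(lra).
  have F2 := @pm _ s (tau * eta) (1 - tau) s0 ltac:(lra).
  have : t * eta = s * (tau * eta) by rewrite /t; ring.
  lra.
have tCd : 8 * (t * (C + d)) <= d.
  have F3 := @pm _ (8 * (C + d)) (t * eta) l ltac:(lra) teta.
  have : eta * (8 * (t * (C + d))) <= eta * d by lra.
  by rewrite ler_pM2l.
have tC0 : 0 <= t * C by apply: mulr_ge0; lra.
have td0 : 0 <= t * d by apply: mulr_ge0; lra.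
have t12 : t <= 1/2.
  rewrite leNgt; apply/negP => H.
  have := @pm _ d (1/2) t (ltW d0) (ltW H); lra.
exists t; split; [lra|lra|] => i.
have Hi : fl La1 Lb1 i tau <= v - d by have := HT i; have := HL i; lra.
have B := HC i.
move: Hi; rewrite /erow /fl /La1 /Lb1.
have [[h0|h0] [h1|h1]] := Hq i; rewrite h0 h1 ?eqxx ?oner_eq0 /= => Hi.
- by apply: (U00b (C := C) (d := d)) => //; lra.
- by apply: (U01b (C := C) (d := d)) => //; lra.
- by apply: (U10b (C := C) (d := d) (s := s) (tau := tau)) => //; lra.
- by apply: (U11b (C := C) (d := d)) => //; lra.
Qed.

Lemma LBpart C v d l t : (forall i, bnd C v (g0 i) (g1 i) (w0 i) (w1 i)) -> 0 < C -> 0 < d ->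
  (forall tau, 0 <= tau -> tau <= 1 -> exists i, v + d <= fl La1 Lb1 i tau) ->
  0 < l -> l <= 1/2 -> 8 * (l * (C + d)) <= d -> 0 <= t -> 8 * (t * (C + d)) <= d ->
  exists i, 0 <= erow g0 g1 q0 q1 w0 w1 l v t i.
Proof.
move=> HC C0 d0 HP lp l12 lCd t0 tCd.
have ld0 : 0 <= l * d by apply: mulr_ge0; lra.
have lC : 4 * (l * C) <= d by lra.
have tC0 : 0 <= t * C by apply: mulr_ge0; lra.
have td0 : 0 <= t * d by apply: mulr_ge0; lra.
have t12 : t <= 1/2.
  rewrite leNgt; apply/negP => H.
  have := @pm _ d (1/2) t (ltW d0) (ltW H); lra.
pose s := t + l.
have s0 : 0 < s by rewrite /s; lra.
pose tau := t / s.
have Ht : t = s * tau by rewrite /tau mulrC divfK // gt_eqF.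
have Hl : l = s * (1 - tau) by rewrite mulrBr -Ht mulr1 /s; ring.
have ta0 : 0 <= tau by rewrite /tau divr_ge0 //; lra.
have ta1 : tau <= 1 by rewrite /tau ler_pdivrMr // mul1r /s; lra.
have [i Hi] := HP tau ta0 ta1.
exists i.
have B := HC i.
move: Hi; rewrite /erow /fl /La1 /Lb1.
have [[h0|h0] [h1|h1]] := Hq i; rewrite h0 h1 ?eqxx ?oner_eq0 /= => Hi.
- by apply: (L00b (C := C) (d := d)) => //; lra.
- by apply: (L01b (C := C) (d := d)) => //; lra.
- by apply: (L10b (C := C) (d := d) (s := s) (tau := tau)) => //; lra.
- by apply: (L11b (C := C) (d := d)) => //; lra.
Qed.

Lemma LMpart C v d c0 l t : (forall i, bnd C v (g0 i) (g1 i) (w0 i) (w1 i)) -> 0 < d ->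
  0 <= c0 -> c0 <= 1/2 -> c0 <= t -> t <= 1 - c0 ->
  (exists i, v + d <= fl La0 La1 i t) ->
  0 < l -> l <= 1/2 -> l * (C + d) <= c0 * d ->
  exists i, 0 <= erow g0 g1 q0 q1 w0 w1 l v t i.
Proof.
move=> HC d0 c00 c01 ct tc [i Hi] lp l12 lCd.
have ed := @pm _ d c0 1 (ltW d0) ltac:(lra).
exists i; have B := HC i.
move: Hi; rewrite /erow /fl /La0 /La1.
have [[h0|h0] [h1|h1]] := Hq i; rewrite h0 h1 ?eqxx ?oner_eq0 /= => Hi.
- by apply: L00; lra.
- by apply: (L01 (C := C) (d := d) (eta := c0)) => //; lra.
- by apply: (L10 (C := C) (d := d) (eta := c0)) => //; lra.
- by apply: (L11 (C := C) (d := d)) => //; lra.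
Qed.

End Analysis.


Section Assemble.
Variable R : realType.
Variable m : nat.
Variables g0 g1 q0 q1 w0 w1 : 'I_m.+1 -> R.
Hypothesis Hq : forall i, (q0 i = 0 \/ q0 i = 1) /\ (q1 i = 0 \/ q1 i = 1).

Let Hq' : forall i, (q1 i = 0 \/ q1 i = 1) /\ (q0 i = 0 \/ q0 i = 1).
Proof. by move=> i; have [? ?] := Hq i. Qed.

Lemma erow_swap l v t i :
  erow g1 g0 q1 q0 w1 w0 l v t i = erow g0 g1 q0 q1 w0 w1 l v (1 - t) i.
Proof. by rewrite /erow; ring. Qed.

Lemma UC v V0 tau0 : 0 <= tau0 -> tau0 <= 1 ->
  (forall i, fl (La0 g0 q0 q1 w0 w1) (Lc1 g0 q0 w0) i tau0 <= V0) -> V0 < v ->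
  exists2 l0, 0 < l0 & forall l, 0 < l -> l < l0 ->
    exists t, [/\ 0 <= t, t <= 1 & forall i, erow g0 g1 q0 q1 w0 w1 l v t i <= 0].
Proof.
move=> ta0 ta1 HL Vv.
have [l0 l00 H] := @UB R m g1 g0 q1 q0 w1 w0 Hq' v V0 tau0 ta0 ta1 HL Vv.
exists l0 => // l lp ll.
have [t [t0 t1 Ht]] := H l lp ll.
exists (1 - t); split; [lra|lra|] => i.
by rewrite -erow_swap.
Qed.

Lemma LOW v Va Vb Vc : v < Va -> v < Vb -> v < Vc ->
  (forall tau, 0 <= tau -> tau <= 1 -> exists i, Va <= fl (La0 g0 q0 q1 w0 w1) (La1 g1 q0 q1 w0 w1) i tau) ->
  (forall tau, 0 <= tau -> tau <= 1 -> exists i, Vb <= fl (La1 g1 q0 q1 w0 w1) (Lb1 g1 q1 w1) i tau) ->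
  (forall tau, 0 <= tau -> tau <= 1 -> exists i, Vc <= fl (La0 g0 q0 q1 w0 w1) (Lc1 g0 q0 w0) i tau) ->
  exists2 l0, 0 < l0 & forall l, 0 < l -> l < l0 ->
    forall t, 0 <= t -> t <= 1 -> exists i, 0 <= erow g0 g1 q0 q1 w0 w1 l v t i.
Proof.
move=> va vb vc Pa Pb Pc.
have [C C0 HC] := bound_data g0 g1 w0 w1 v.
pose d := Num.min Va (Num.min Vb Vc) - v.
have d0 : 0 < d by rewrite /d subr_gt0 !lt_min va vb vc.
have da : v + d <= Va.
  rewrite /d; have : Num.min Va (Num.min Vb Vc) <= Va by rewrite ge_min lexx.
  lra.
have db : v + d <= Vb.
  rewrite /d; have : Num.min Va (Num.min Vb Vc) <= Vb by rewrite !ge_min lexx !orbT.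
  lra.
have dc : v + d <= Vc.
  rewrite /d; have : Num.min Va (Num.min Vb Vc) <= Vc by rewrite !ge_min lexx !orbT.
  lra.
have Cd0 : 0 < 8 * (C + d) by lra.
pose c0 := d / (8 * (C + d)).
have c00 : 0 < c0 by rewrite /c0 divr_gt0.
have c0E : c0 * (8 * (C + d)) = d by rewrite /c0 divfK // gt_eqF.
have cd0 : 0 <= c0 * d by apply: mulr_ge0; lra.
have cC0 : 0 < c0 * C by apply: mulr_gt0.
have c018 : c0 <= 1/8.
  rewrite leNgt; apply/negP => H.
  have := @pm _ d (1/8) c0 (ltW d0) (ltW H); lra.
pose l0 := Num.min (1/2) (c0 * d / (8 * (C + d))).
exists l0; first by rewrite lt_min; apply/andP; split; [lra | apply: divr_gt0 => //; apply: mulr_gt0].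

move=> l lp ll0 t t0 t1.
have l12 : l <= 1/2 by have := ll0; rewrite lt_min => /andP [h _]; lra.
have lCd : l * (8 * (C + d)) <= c0 * d.
  have : l < c0 * d / (8 * (C + d)) by move: ll0; rewrite lt_min => /andP [_ h].
  by rewrite ltr_pdivlMr // => /ltW.
have ed := @pm _ d c0 (1/8) (ltW d0) c018.
have ld0 : 0 <= l * d by apply: mulr_ge0; lra.
have lC0 : 0 <= l * C by apply: mulr_ge0; lra.
have lcd : 8 * (l * (C + d)) <= d by lra.
have Pb' : forall tau, 0 <= tau -> tau <= 1 -> exists i, v + d <= fl (La1 g1 q0 q1 w0 w1) (Lb1 g1 q1 w1) i tau.
  by move=> tau h1 h2; have [i Hi] := Pb tau h1 h2; exists i; lra.
have Pc' : forall tau, 0 <= tau -> tau <= 1 -> exists i, v + d <= fl (La0 g0 q0 q1 w0 w1) (Lc1 g0 q0 w0) i tau.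
  by move=> tau h1 h2; have [i Hi] := Pc tau h1 h2; exists i; lra.
have HC' : forall i, bnd C v (g1 i) (g0 i) (w1 i) (w0 i).
  by move=> i; have [? ? ? ?] := HC i; split.
case: (lerP t c0) => tc.
  apply: (LBpart Hq HC C0 d0 Pb' lp l12 lcd t0).
  have := @pm _ (8 * (C + d)) t c0 (ltW Cd0) tc; lra.
case: (lerP (1 - c0) t) => tc'.
  have [|i Hi] := @LBpart R m g1 g0 q1 q0 w1 w0 Hq' C v d l (1 - t) HC' C0 d0 Pc' lp l12 lcd ltac:(lra).
    have := @pm _ (8 * (C + d)) (1 - t) c0 (ltW Cd0) ltac:(lra); lra.
  exists i; move: Hi; rewrite erow_swap.
  by have -> : 1 - (1 - t) = t by ring.
have [i Hi] := Pa t t0 t1.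
apply: (LMpart Hq (C := C) (d := d) (c0 := c0) HC d0 (ltW c00) _ (ltW tc) _ _ lp l12 _).
- lra.
- lra.
- by exists i; lra.
- lra.
Qed.

End Assemble.

Section Core.
Variable R : realType.

Definition isr (x : R) := exists q : rat, x = ratr q.

Lemma isrD x y : isr x -> isr y -> isr (x + y).
Proof. by move=> [a ->] [b ->]; exists (a + b); rewrite rmorphD. Qed.
Lemma isrN x : isr x -> isr (- x).
Proof. by move=> [a ->]; exists (- a); rewrite rmorphN. Qed.
Lemma isrB x y : isr x -> isr y -> isr (x - y).
Proof. by move=> hx hy; apply: isrD => //; apply: isrN. Qed.
Lemma isrM x y : isr x -> isr y -> isr (x * y).
Proof. by move=> [a ->] [b ->]; exists (a * b); rewrite rmorphM. Qed.
Lemma isrV x : isr x -> isr (x^-1).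
Proof. by move=> [a ->]; exists (a^-1); rewrite fmorphV. Qed.
Lemma isr_min x y : isr x -> isr y -> isr (Num.min x y).
Proof. by move=> hx hy; case: (leP x y). Qed.

Lemma cand_isr m (a b : 'I_m.+1 -> R) V : (forall i, isr (a i)) -> (forall i, isr (b i)) ->
  cand a b V -> isr V.
Proof.
move=> ha hb [i [k [->|[->|->]]]] //.
apply: isrD => //; apply: isrM; last by apply: isrB.
apply: isrM; first by apply: isrB.
by apply: isrV; apply: isrB; apply: isrB.
Qed.

Lemma minmax_prop m (a b : 'I_m.+1 -> R) : exists V, [/\ cand a b V,
  (exists tau, [/\ 0 <= tau, tau <= 1 & forall i, fl a b i tau <= V]) &
  (forall tau, 0 <= tau -> tau <= 1 -> exists i, V <= fl a b i tau)].
Proof.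
have [t [V [x [[t0 t1 HV Hc] [x0 x1 xa xb]]]]] := minmax_lines a b.
exists V; split => //; first by exists t.
move=> tau ta0 ta1.
have [i Hi] := fin_argmax ord0 (fun j => fl a b j tau).
exists i.
have E : \sum_j x j * fl a b j tau = tau * \sum_j x j * a j + (1 - tau) * \sum_j x j * b j.
  by rewrite !mulr_sumr -big_split /=; apply: eq_bigr => j _; rewrite /fl; ring.
have S1 : \sum_j x j * fl a b j tau <= \sum_j x j * fl a b i tau.
  by apply: ler_sum => j _; apply: ler_wpM2l.
have S2 : \sum_j x j * fl a b i tau = fl a b i tau by rewrite -mulr_suml x1 mul1r.
have := @pm _ tau _ _ ta0 xa; have := @pm _ (1 - tau) _ _ ltac:(lra) xb.
lra.
Qed.

End Core.

Lemma core (R : realType) m n (hn : (n <= 1)%N) (G Q W : 'M[R]_(m.+1, n.+1))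
  (Q01 : forall i j, Q i j = 0 \/ Q i j = 1)
  (HG : forall i j, isr (G i j)) (HW : forall i j, isr (W i j)) :
  exists r : rat, forall eps, 0 < eps -> exists2 l0, 0 < l0 &
    forall l, 0 < l -> l < l0 -> forall v, fixedp G Q W l v -> `|v - ratr r| <= eps.
Proof.
pose g0 := G^~ ord0. pose g1 := G^~ ord_max.
pose q0 := Q^~ ord0. pose q1 := Q^~ ord_max.
pose w0 := W^~ ord0. pose w1 := W^~ ord_max.
have Hq : forall i, (q0 i = 0 \/ q0 i = 1) /\ (q1 i = 0 \/ q1 i = 1).
  by move=> i; split; apply: Q01.
have [Va [Ca [ta [ta0 ta1 HVa]] Pa]] := minmax_prop (La0 g0 q0 q1 w0 w1) (La1 g1 q0 q1 w0 w1).
have [Vb [Cb [tb [tb0 tb1 HVb]] Pb]] := minmax_prop (La1 g1 q0 q1 w0 w1) (Lb1 g1 q1 w1).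
have [Vc [Cc [tc [tc0 tc1 HVc]] Pc]] := minmax_prop (La0 g0 q0 q1 w0 w1) (Lc1 g0 q0 w0).
have iLa0 : forall i, isr (La0 g0 q0 q1 w0 w1 i).
  by move=> i; rewrite /La0; case: ifP => _; [case: ifP => _|]; apply: HG || apply: HW.
have iLa1 : forall i, isr (La1 g1 q0 q1 w0 w1 i).
  by move=> i; rewrite /La1; case: ifP => _; [case: ifP => _|]; apply: HG || apply: HW.
have iLb1 : forall i, isr (Lb1 g1 q1 w1 i).
  by move=> i; rewrite /Lb1; case: ifP => _; apply: HG || apply: HW.
have iLc1 : forall i, isr (Lc1 g0 q0 w0 i).
  by move=> i; rewrite /Lc1; case: ifP => _; apply: HG || apply: HW.
pose r0 := Num.min Va (Num.min Vb Vc).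
have [r Hr] : isr r0.
  apply: isr_min; first exact: cand_isr iLa0 iLa1 Ca.
  apply: isr_min; first exact: cand_isr iLa1 iLb1 Cb.
  exact: cand_isr iLa0 iLc1 Cc.
exists r => eps eps0; rewrite -Hr.
have [l1 l10 Hl1] : exists2 l1, 0 < l1 & forall l, 0 < l -> l < l1 ->
    exists t, [/\ 0 <= t, t <= 1 & forall i, erow g0 g1 q0 q1 w0 w1 l (r0 + eps) t i <= 0].
  have : r0 < r0 + eps by lra.
  rewrite {1}/r0 !gt_min => /orP [H|/orP [H|H]].
  - exact: (UA Hq ta0 ta1 HVa H).
  - exact: (UB g0 Hq tb0 tb1 HVb H).
  - exact: (UC g1 Hq tc0 tc1 HVc H).
have [l2 l20 Hl2] : exists2 l2, 0 < l2 & forall l, 0 < l -> l < l2 ->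
    forall t, 0 <= t -> t <= 1 -> exists i, 0 <= erow g0 g1 q0 q1 w0 w1 l (r0 - eps) t i.
  apply: (LOW Hq (Va := Va) (Vb := Vb) (Vc := Vc)) => //.
  - have : r0 <= Va by rewrite /r0 ge_min lexx.
    lra.
  - have : r0 <= Vb by rewrite /r0 !ge_min lexx !orbT.
    lra.
  - have : r0 <= Vc by rewrite /r0 !ge_min lexx !orbT.
    lra.
exists (Num.min 1 (Num.min l1 l2)).
  by rewrite !lt_min l10 l20 ltr01.
move=> l lp; rewrite !lt_min => /andP [l1' /andP [ll1 ll2]] v Hv.
have [t [t0 t1 Ht]] := Hl1 l lp ll1.
have U := upper_bound Q01 lp (ltW l1') Hv t0 t1 Ht.
have L := lower_bound hn Q01 lp (ltW l1') Hv (Hl2 l lp ll2).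
by rewrite ler_norml; apply/andP; split; lra.
Qed.

Lemma near_right0 (R : realType) (P : R -> Prop) (l0 : R) : 0 < l0 ->
  (forall t, 0 < t -> t < l0 -> P t) -> \forall t \near (0 : R)^'+, P t.
Proof.
move=> l00 H; exists l0 => //= t /= Ht tpos.
apply: H => //.
by move: Ht; rewrite sub0r normrN gtr0_norm.
Qed.

Lemma conv_from (R : realType) (f : R -> R) (r : R) :
  (forall eps, 0 < eps -> exists2 l0, 0 < l0 & forall l, 0 < l -> l < l0 -> `|f l - r| <= eps) ->
  f @ (0 : R)^'+ --> r.
Proof.
move=> H; apply/cvgrPdist_le => eps e0.
have [l0 l00 Hl] := H eps e0.
by apply: (near_right0 l00) => t tp tl; rewrite distrC; apply: Hl.
Qed.

Section Main.
Variable R : realType.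

Lemma main_real m n (hn : (n <= 1)%N) (G Q W : 'M[R]_(m.+1, n.+1))
  (Q01 : forall i j, Q i j = 0 \/ Q i j = 1)
  (HG : forall i j, isr (G i j)) (HW : forall i j, isr (W i j)) :
  exists r : rat, forall eps, 0 < eps -> exists2 l0, 0 < l0 &
    forall l, 0 < l -> l < l0 -> `|disc_value G Q W l - ratr r| <= eps.
Proof.
have [r Hr] := core hn Q01 HG HW.
exists r => eps e0; have [l0 l00 H] := Hr eps e0.
exists (Num.min l0 1); first by rewrite lt_min l00 ltr01.
move=> l lp; rewrite lt_min => /andP [ll0 ll1].
have [v Hv] := fix_exists hn G W Q01 lp (ltW ll1).
rewrite (disc_fix Q01 lp (ltW ll1) Hv); exact: (H l lp ll0 v Hv).
Qed.

Lemma value_T m n (A : 'M[R]_(m, n)) v :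
  is_matrix_game_value (\matrix_(j, i) - A i j) v -> is_matrix_game_value A (- v).
Proof.
move=> [[x [Hx1 Hx]] [y [Hy1 Hy]]]; split.
- exists y; split => // j; have := Hy j.
  under eq_bigr do rewrite mxE.
  rewrite (eq_bigr (fun i => - (y 0 i * A i j))); last by move=> i _; ring.
  by rewrite sumrN lerNl.
- exists x; split => // i; have := Hx i.
  under eq_bigr do rewrite mxE.
  rewrite (eq_bigr (fun j => - (A i j * x 0 j))); last by move=> j _; ring.
  by rewrite sumrN lerNr.
Qed.

Lemma main_real_T m n (hm : (m <= 1)%N) (G Q W : 'M[R]_(m.+1, n.+1))
  (Q01 : forall i j, Q i j = 0 \/ Q i j = 1)
  (HG : forall i j, isr (G i j)) (HW : forall i j, isr (W i j)) :
  exists r : rat, forall eps, 0 < eps -> exists2 l0, 0 < l0 &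
    forall l, 0 < l -> l < l0 -> `|disc_value G Q W l - ratr r| <= eps.
Proof.
pose G' := \matrix_(j, i) - G i j.
pose Q' := \matrix_(j, i) Q i j.
pose W' := \matrix_(j, i) - W i j.
have Q01' : forall j i, Q' j i = 0 \/ Q' j i = 1 by move=> j i; rewrite mxE.
have HG' : forall j i, isr (G' j i) by move=> j i; rewrite mxE; apply: isrN.
have HW' : forall j i, isr (W' j i) by move=> j i; rewrite mxE; apply: isrN.
have [r Hr] := main_real hm Q01' HG' HW'.
exists (- r) => eps e0; have [l0 l00 H] := Hr eps e0.
exists (Num.min l0 1); first by rewrite lt_min l00 ltr01.
move=> l lp; rewrite lt_min => /andP [ll0 ll1].
have [v Hv] := fix_exists hm G' W' Q01' lp (ltW ll1).
have Hv' : fixedp G Q W l (- v).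
  apply: value_T.
  have -> : \matrix_(j, i) - shapley_mx G Q W l (- v) i j = shapley_mx G' Q' W' l v.
    by apply/matrixP => j i; rewrite !mxE; ring.
  exact: Hv.
rewrite (disc_fix Q01 lp (ltW ll1) Hv').
have := H l lp ll0; rewrite (disc_fix Q01' lp (ltW ll1) Hv) rmorphN.
by rewrite -normrN opprB addrC opprK.
Qed.

End Main.

Unset Implicit Arguments.
Theorem theorem1 (R : realType) (m n : nat) (g q w : 'M[rat]_(m, n)) :
  (0 < m)%N -> (0 < n)%N ->
  (forall i j, q i j = 0 \/ q i j = 1) ->
  (minn m n < 3)%N ->
  exists r : rat,
    (fun lam : R =>
       disc_value (map_mx (fun a : rat => (ratr a : R)) g)
                  (map_mx (fun a : rat => (ratr a : R)) q)
                  (map_mx (fun a : rat => (ratr a : R)) w) lam)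
      @ (0 : R)^'+ --> (ratr r : R).
Proof.
case: m g q w => [|m] // ; case: n => [|n] // g q w _ _ q01 hmn.
pose G := map_mx (fun a : rat => (ratr a : R)) g.
pose Q := map_mx (fun a : rat => (ratr a : R)) q.
pose W := map_mx (fun a : rat => (ratr a : R)) w.
have Q01 : forall i j, Q i j = 0 \/ Q i j = 1.
  by move=> i j; rewrite mxE; case: (q01 i j) => ->; [left; rewrite rmorph0 | right; rewrite rmorph1].
have HG : forall i j, isr (G i j) by move=> i j; rewrite mxE; exists (g i j).
have HW : forall i j, isr (W i j) by move=> i j; rewrite mxE; exists (w i j).
have [hm|hn] : (m <= 1)%N \/ (n <= 1)%N.
  by move: hmn; rewrite ltnS geq_min !ltnS => /orP.
- have [r Hr] := main_real_T hm Q01 HG HW.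
  by exists r; apply: conv_from.
- have [r Hr] := main_real hn Q01 HG HW.
  by exists r; apply: conv_from.
Qed.
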